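(* Let $q=3^m$ with $m\ge1$ and $f(x)=x^{q+2}$ on $\mathbb{F}_{q^2}$. If $q\ge 9$ then $\nu_2>0$, and if $q\ge 27$ then $\nu_5>0$.
   Context: $\beta_f(a,b)$ is the number of $(x,y)\in\mathbb{F}_{q^2}^2$ with $f(x)-f(y)=b$ and $f(x+a)-f(y+a)=b$. For the power function $f$, $\nu_i=\#\{b\in\mathbb{F}_{q^2}^*:\ \beta_f(1,b)=i\}$. *)

(* Defs.v *)
From mathcomp Require Import all_boot all_order all_algebra all_field.
Set Implicit Arguments. Unset Strict Implicit. Unset Printing Implicit Defensive.
Import GRing.Theory.
Local Open Scope ring_scope.

Definition boomerang_beta (F : finFieldType) (f : F -> F) (a b : F) : nat :=
  #|[set xy : F * F | (f xy.1 - f xy.2 == b) && (f (xy.1 + a) - f (xy.2 + a) == b)]|.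

Definition nu (F : finFieldType) (f : F -> F) (i : nat) : nat :=
  #|[set b : F | (b != 0) && (boomerang_beta f 1 b == i)]|.

Definition powf (F : finFieldType) (q : nat) : F -> F := fun x => x ^+ (q + 2).

(* Main.v *)
Require Import Defs.
From mathcomp Require Import all_boot all_order all_algebra all_field.
From mathcomp Require Import ring.
From mathcomp Require Import zify.
Set Implicit Arguments. Unset Strict Implicit. Unset Printing Implicit Defensive.
Import GRing.Theory.
Local Open Scope ring_scope.

Lemma by3 (F : comRingType) (h3 : 3%:R = 0 :> F) (Z X Y : F) :
  X - Y = 3%:R * Z -> X = Y.
Proof. by move=> /eqP; rewrite h3 mul0r subr_eq0 => /eqP. Qed.
Arguments by3 [F] h3 Z [X Y].

Lemma card_roots (F : finFieldType) (p : {poly F}) :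
  p != 0 -> (#|[set x | root p x]| < size p)%N.
Proof.
move=> p0; rewrite cardE; apply: max_poly_roots => //.
  by apply/allP => x; rewrite mem_enum inE.
exact: enum_uniq.
Qed.

Lemma fiber_bound (T U : finType) (f : T -> U) (A : {set T}) (B : {set U}) k :
  {in A, forall x, f x \in B} ->
  (forall y, y \in B -> #|[set x in A | f x == y]| <= k)%N ->
  (#|A| <= #|B| * k)%N.
Proof.
move=> fAB fib.
have -> : #|A| = (\sum_(y in B) #|[set x in A | f x == y]|)%N.
  rewrite -sum1_card (partition_big f (mem B)) /=; last by move=> x /fAB.
  apply: eq_bigr => y yB; rewrite -sum1_card; apply: eq_bigl => x.
  by rewrite inE.
rewrite -sum_nat_const; exact: leq_sum.
Qed.

Lemma nat_fact (q t : nat) : q = t.*2.+1 ->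
  (q * q = (t * q.+1).*2.+1)%N /\ (q.-1 * q.+1 = (t * q.+1).*2)%N.
Proof. move=> ->; split; nia. Qed.

Section Conj.
Variable F : finFieldType.
Variable m : nat.
Hypothesis h3 : 3%:R = 0 :> F.
Hypothesis hF : #|F| = (3 ^ m * 3 ^ m)%N.
Hypothesis m1 : (0 < m)%N.

Definition q := (3 ^ m)%N.
Definition cj (x : F) := x ^+ q.

Lemma frob3 (x y : F) : (x + y) ^+ 3 = x ^+ 3 + y ^+ 3.
Proof. apply: (by3 h3 (x * y ^+ 2 + x ^+ 2 * y)); ring. Qed.

Lemma frobk k (x y : F) : (x + y) ^+ (3 ^ k) = x ^+ (3 ^ k) + y ^+ (3 ^ k).
Proof.
elim: k x y => [|k IH] x y; first by rewrite expn0 !expr1.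
by rewrite expnS !exprM frob3 IH.
Qed.

Lemma q_gt0 : (0 < q)%N.
Proof. by rewrite /q expn_gt0. Qed.

Lemma cjD x y : cj (x + y) = cj x + cj y.
Proof. exact: frobk. Qed.
Lemma cjM x y : cj (x * y) = cj x * cj y.
Proof. exact: exprMn. Qed.
Lemma cj0 : cj 0 = 0.
Proof. by rewrite /cj expr0n eqn0Ngt q_gt0. Qed.
Lemma cj1 : cj 1 = 1.
Proof. exact: expr1n. Qed.
Lemma cjN x : cj (- x) = - cj x.
Proof. by apply/eqP; rewrite -addr_eq0 -cjD addrC subrr cj0. Qed.
Lemma cjV x : cj (x ^-1) = (cj x) ^-1.
Proof. exact: exprVn. Qed.
Lemma cjX x n : cj (x ^+ n) = (cj x) ^+ n.
Proof. by rewrite /cj exprAC. Qed.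
Lemma cjK x : cj (cj x) = x.
Proof. by rewrite /cj -exprM -hF expf_card. Qed.
Lemma cjn n : cj (n%:R) = n%:R.
Proof. by elim: n => [|n IH]; rewrite ?cj0 // -addn1 natrD cjD IH cj1. Qed.
Lemma cjB x y : cj (x - y) = cj x - cj y.
Proof. by rewrite cjD cjN. Qed.

Definition cjE := (cjD, cjM, cjN, cjV, cjX, cj1, cj0, cjK, cjn).


Definition hh (u : F) := u ^+ 2 * cj u + cj u - u.

Lemma powfE x : @powf F q x = x ^+ 2 * cj x.
Proof. by rewrite /powf exprD mulrC. Qed.

Lemma hhN u : hh (- u) = - hh u.
Proof. rewrite /hh cjN; ring. Qed.

Lemma solve_pair (u v b : F) : cj b != b -> hh u - hh v = b ->
  u ^+ 2 - u * cj u = v ^+ 2 - v * cj v -> v = - u.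
Proof.
move=> hb hd hA.
have hA' : cj u ^+ 2 - cj u * u = cj v ^+ 2 - cj v * v.
  by move: (congr1 cj hA); rewrite !cjE.
set U := cj u in hA' hA hd *; set V := cj v in hA' hA hd *.
have h2 : (2%:R : F) = - 1 by apply: (by3 h3 1); ring.
have hdd : (u - U) ^+ 2 = (v - V) ^+ 2.
  have -> : (u - U) ^+ 2 = (u ^+ 2 - u * U) + (U ^+ 2 - U * u) by ring.
  by rewrite hA hA'; ring.
have hpd : (u + U) * (u - U) = (v + V) * (v - V).
  have -> : (u + U) * (u - U) = (u ^+ 2 - u * U) - (U ^+ 2 - U * u) by ring.
  by rewrite hA hA'; ring.
have hreal : u - U = 0 -> False.
  move=> d0; have : (v - V) ^+ 2 = 0 by rewrite -hdd d0 expr0n.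
  move/eqP; rewrite expf_eq0 /= => /eqP d0'.
  have eu : U = u by apply/eqP; rewrite eq_sym -subr_eq0 d0.
  have ev : V = v by apply/eqP; rewrite eq_sym -subr_eq0 d0'.
  have : b = u ^+ 3 - v ^+ 3 by rewrite -hd /hh -/U -/V eu ev; ring.
  move=> eb; move: hb; rewrite eb !cjE -/U -/V eu ev.
  by rewrite eqxx.
have dn0 : u - U != 0 by apply/negP => /eqP /hreal.
have : (u - U - (v - V)) * (u - U + (v - V)) = 0.
  by rewrite -subr_sqr hdd subrr.
move/eqP; rewrite mulf_eq0 => /orP [|] /eqP hc.
  have edd : v - V = u - U by apply/eqP; rewrite eq_sym -subr_eq0 hc.
  rewrite edd in hpd.
  have epp : v + V = u + U by apply: (mulIf dn0); rewrite hpd.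
  have euv : u = v.
    have : (u + U) + (u - U) = (v + V) + (v - V) by rewrite epp edd.
    have -> : (u + U) + (u - U) = - u by apply: (by3 h3 u); ring.
    have -> : (v + V) + (v - V) = - v by apply: (by3 h3 v); ring.
    by move/oppr_inj.
  by move: hb; rewrite -hd euv subrr cj0 eqxx.
have edd : v - V = - (u - U) by apply/eqP; rewrite -addr_eq0 addrC hc.
rewrite edd in hpd.
have epp : v + V = - (u + U).
  by apply: (mulIf dn0); rewrite mulNr hpd mulrN opprK.
have : (v + V) + (v - V) = - ((u + U) + (u - U)) by rewrite epp edd; ring.
have -> : (u + U) + (u - U) = - u by apply: (by3 h3 u); ring.
have -> : (v + V) + (v - V) = - v by apply: (by3 h3 v); ring.
by move/oppr_inj.
Qed.

Lemma betaE (b : F) : cj b != b ->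
  boomerang_beta (@powf F q) 1 b = #|[set u | hh u == - b]|.
Proof.
move=> hb; rewrite /boomerang_beta.
have -> : [set xy : F * F | (@powf F q xy.1 - @powf F q xy.2 == b)
     && (@powf F q (xy.1 + 1) - @powf F q (xy.2 + 1) == b)] =
   (fun u => (u + 1, 1 - u)) @: [set u | hh u == - b].
  apply/setP => [[x y]]; rewrite !inE /= !powfE !cjD cj1.
  apply/andP/imsetP.
    case=> /eqP e1 /eqP e2.
    set X := cj x in e1 e2; set Y := cj y in e1 e2.
    have e1' : x ^+ 2 * X - y ^+ 2 * Y - b = 0 by rewrite e1 subrr.
    have e2' : (x + 1) ^+ 2 * (X + 1) - (y + 1) ^+ 2 * (Y + 1) - b = 0.
      by rewrite e2 subrr.
    have hd : hh (x - 1) - hh (y - 1) = b.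
      apply/eqP; rewrite -subr_eq0; apply/eqP.
      rewrite /hh !cjB cj1 -/X -/Y.
      have -> : ((x - 1) ^+ 2 * (X - 1) + (X - 1) - (x - 1) -
        ((y - 1) ^+ 2 * (Y - 1) + (Y - 1) - (y - 1)) - b) =
        - ((x ^+ 2 * X - y ^+ 2 * Y - b) + ((x + 1) ^+ 2 * (X + 1) - (y + 1) ^+ 2 * (Y + 1) - b)).
        apply: (by3 h3 (X + X * x ^+ 2 - Y - Y * y ^+ 2 - b + x - y)); ring.
      by rewrite e1' e2' addr0 oppr0.
    have hA : (x - 1) ^+ 2 - (x - 1) * cj (x - 1) = (y - 1) ^+ 2 - (y - 1) * cj (y - 1).
      apply/eqP; rewrite -subr_eq0; apply/eqP.
      rewrite !cjB cj1 -/X -/Y.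
      have -> : (x - 1) ^+ 2 - (x - 1) * (X - 1) - ((y - 1) ^+ 2 - (y - 1) * (Y - 1)) =
        - ((x ^+ 2 * X - y ^+ 2 * Y - b) - ((x + 1) ^+ 2 * (X + 1) - (y + 1) ^+ 2 * (Y + 1) - b)).
        apply: (by3 h3 (- X * x + Y * y - x + y)); ring.
      by rewrite e1' e2' subr0 oppr0.
    have ev := solve_pair hb hd hA.
    exists (x - 1).
      rewrite inE; apply/eqP.
      move: hd; rewrite ev hhN => hd.
      rewrite -hd; apply: (by3 h3 (hh (x - 1))); ring.
    congr (_, _); first by ring.
    by apply/eqP; rewrite -subr_eq0 -[y](subrK 1) ev; apply/eqP; ring.
  case=> u; rewrite inE => /eqP hu [-> ->].
  rewrite !cjD !cjN cj1; set U := cj u.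
  have hu' : u ^+ 2 * U + U - u = - b by [].
  split; apply/eqP.
    rewrite -[b]opprK -hu'.
    apply: (by3 h3 (U + U * u ^+ 2 + u)); ring.
  rewrite -[b]opprK -hu'.
  apply: (by3 h3 (3%:R * U + U * u ^+ 2 + 5%:R * u)); ring.
by rewrite card_imset // => u v [] /addIr.
Qed.

Definition PP (T D N : F) :=
  N ^+ 3 * (N + 1) ^+ 2 - T ^+ 2 * (N + 1) ^+ 2 + D ^+ 2 * N ^+ 2.
Definition uN (T D N : F) := - (T / N + D / (N + 1)).

Lemma hh0 : hh 0 = 0.
Proof. by rewrite /hh cj0; ring. Qed.

Lemma fwd (c u : F) : cj c != c -> hh u = c ->
  [/\ cj (u * cj u) = u * cj u, u * cj u != 0, u * cj u + 1 != 0,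
      u = uN (c + cj c) (c - cj c) (u * cj u) &
      PP (c + cj c) (c - cj c) (u * cj u) = 0].
Proof.
move=> hc hu.
have hcc : cj c = cj u ^+ 2 * u + u - cj u by rewrite -hu /hh !cjE.
set U := cj u in hcc *.
set N := u * U.
have eT : c + cj c = (u + U) * N.
  by rewrite hcc -hu /hh -/U /N; ring.
have eD : c - cj c = (u - U) * (N + 1).
  rewrite hcc -hu /hh -/U /N.
  by apply: (by3 h3 (U - u)); ring.
have hN1 : N + 1 != 0.
  apply/negP => /eqP h0; move: hc; rewrite -subr_eq0 -oppr_eq0 opprB eD h0 mulr0.
  by rewrite eqxx.
have hN0 : N != 0.
  apply/negP; rewrite /N mulf_eq0 => /orP [] /eqP h0.
    by move: hc; rewrite -hu h0 hh0 cj0 eqxx.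
  have u0 : u = 0 by rewrite -[u]cjK -/U h0 cj0.
  by move: hc; rewrite -hu u0 hh0 cj0 eqxx.
split => //.
- by rewrite /N /U cjM cjK mulrC.
- rewrite /uN eT eD.
  have -> : (u + U) * N / N + (u - U) * (N + 1) / (N + 1) = (u + U) + (u - U).
    by field; rewrite hN0 hN1.
  by apply: (by3 h3 u); ring.
- rewrite /PP eT eD /N.
  apply: (by3 h3 (- (u ^+ 2 * U ^+ 2 * ((u * U + 1) ^+ 2) * (u * U)))); ring.
Qed.

Lemma bwd (c N : F) : cj c != c -> cj N = N -> N != 0 -> N + 1 != 0 ->
  PP (c + cj c) (c - cj c) N = 0 ->
  hh (uN (c + cj c) (c - cj c) N) = c /\
  uN (c + cj c) (c - cj c) N * cj (uN (c + cj c) (c - cj c) N) = N.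
Proof.
move=> hc hN hN0 hN1 hP.
set T := c + cj c in hP *; set D := c - cj c in hP *.
set u := uN T D N.
have cT : cj T = T by rewrite /T cjD cjK addrC.
have cD : cj D = - D by rewrite /D cjB cjK opprB.
have cu : cj u = - (T / N - D / (N + 1)).
  by rewrite /u /uN cjN cjD !cjM !cjV cT cD cjD cj1 hN; ring.
have uu : u * cj u = N.
  rewrite cu /u /uN.
  have -> : - (T / N + D / (N + 1)) * - (T / N - D / (N + 1)) =
     N - PP T D N / (N ^+ 2 * (N + 1) ^+ 2).
    by rewrite /PP; field; rewrite hN0 hN1.
  by rewrite hP mul0r subr0.
split => //.
have -> : hh u = u * (u * cj u) + cj u - u by rewrite /hh; ring.
rewrite uu cu /u /uN.
apply: (by3 h3 (- c + D / (N + 1))).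
rewrite /T /D; field; by rewrite hN0 hN1.
Qed.

Definition rootset (c : F) :=
  [set N | [&& cj N == N, N != 0, N + 1 != 0 & PP (c + cj c) (c - cj c) N == 0]].

Lemma fiberE (c : F) : cj c != c ->
  #|[set u | hh u == c]| = #|rootset c|.
Proof.
move=> hc.
have -> : rootset c = (fun u => u * cj u) @: [set u | hh u == c].
  apply/setP => N; rewrite inE; apply/idP/imsetP.
    case/and4P => /eqP hN hN0 hN1 /eqP hP.
    have [h1 h2] := bwd hc hN hN0 hN1 hP.
    by exists (uN (c + cj c) (c - cj c) N); rewrite ?inE ?h1.
  case=> u; rewrite inE => /eqP hu ->.
  have [h1 h2 h3' h4 h5] := fwd hc hu.
  by rewrite h1 h2 h3' h5 !eqxx.
rewrite card_in_imset // => u v; rewrite !inE => /eqP hu /eqP hv e.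
have [_ _ _ h4 _] := fwd hc hu; have [_ _ _ h4' _] := fwd hc hv.
by rewrite h4 h4' e.
Qed.

Lemma imag_real (w a : F) : cj w = - w -> cj a = a -> w ^+ 2 = a ^+ 2 -> w = 0.
Proof.
move=> hw ha e.
have h2w : w + w = 0 -> w = 0.
  move=> e2; have -> : w = 3%:R * w - (w + w) by ring.
  by rewrite e2 h3 mul0r subr0.
have : (w - a) * (w + a) = 0 by rewrite -subr_sqr e subrr.
move/eqP; rewrite mulf_eq0 => /orP [] /eqP e'.
  have ewa : w = a by apply/eqP; rewrite -subr_eq0 e'.
  apply: h2w; move: (congr1 cj ewa); rewrite hw ha -ewa => e3.
  by rewrite -{1}e3 addNr.
have ewa : w = - a by apply/eqP; rewrite -addr_eq0 e'.
apply: h2w; move: (congr1 cj ewa); rewrite hw cjN ha -ewa => e3.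
by rewrite -{1}e3 addNr.
Qed.

Section Family.
Variables rho delta phi : F.
Hypothesis hr : cj rho = rho.
Hypothesis hd : cj delta = - delta.
Hypothesis hdr : delta ^+ 2 = 1 + rho ^+ 2.
Hypothesis r0 : rho != 0.
Hypothesis d0 : delta != 0.
Hypothesis hp : cj phi = phi.
Hypothesis p3 : phi ^+ 3 != phi.

Definition lam := 1 + rho ^+ 2.
Definition EE := lam * phi ^+ 2 - 1.
Definition Rt := - (lam * (phi - 1) ^+ 2 - 1).
Definition St := - (lam * (phi + 1) ^+ 2 - 1).
Definition TT := Rt / EE * (St / EE) / rho.
Definition DD := delta * lam ^+ 2 * phi * (1 - phi ^+ 2) / (rho * EE ^+ 2).
Definition cc := - (TT + DD).
Definition Gt (N : F) := rho ^+ 2 * (N * EE - 1) ^+ 3 +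
   rho ^+ 2 * lam * (N * EE - 1) ^+ 2 - lam ^+ 3 * (phi ^+ 3 - phi) ^+ 2.

Lemma p0 : phi != 0.
Proof. by apply: contraNneq p3 => ->; rewrite expr0n. Qed.
Lemma p1 : phi != 1.
Proof. by apply: contraNneq p3 => ->; rewrite expr1n. Qed.
Lemma pm1 : phi != -1.
Proof.
have e : (-1 : F) ^+ 3 = -1 by ring.
by apply: contraNneq p3 => ->; rewrite e eqxx.
Qed.

Lemma lamE : lam = delta ^+ 2.
Proof. by rewrite hdr. Qed.

Lemma lam0 : lam != 0.
Proof. by rewrite lamE expf_neq0. Qed.

Lemma sq1_imag (a : F) : cj a = a -> a != 0 -> lam * a ^+ 2 != 1.
Proof.
move=> ha a0; apply/negP => /eqP e.
have : delta * a = 0.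
  apply: (@imag_real _ 1); rewrite ?cjM ?hd ?ha ?cj1 //; first by ring.
  by rewrite exprMn -lamE e expr1n.
by move/eqP; rewrite mulf_eq0 (negbTE d0) (negbTE a0).
Qed.

Lemma EE0 : EE != 0.
Proof. by rewrite /EE subr_eq0 sq1_imag // p0. Qed.
Lemma Rt0 : Rt != 0.
Proof.
rewrite /Rt oppr_eq0 subr_eq0 sq1_imag //; first by rewrite cjB hp cj1.
by rewrite subr_eq0 p1.
Qed.
Lemma St0 : St != 0.
Proof.
rewrite /St oppr_eq0 subr_eq0 sq1_imag //; first by rewrite cjD hp cj1.
by rewrite addr_eq0 pm1.
Qed.

Lemma key_poly (N : F) :
  rho ^+ 2 * EE ^+ 5 * N ^+ 3 * (N + 1) ^+ 2 - Rt ^+ 2 * St ^+ 2 * EE * (N + 1) ^+ 2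
  + lam ^+ 5 * phi ^+ 2 * (1 - phi ^+ 2) ^+ 2 * EE * N ^+ 2 =
  (N * EE - Rt) * (N * EE - St) * Gt N.
Proof.
rewrite /Gt /EE /Rt /St /lam.
apply: (by3 h3 (- 2%:R * N * phi ^+ 2 * rho ^+ 2 - 6%:R * N * phi ^+ 2 * rho ^+ 4 - 7%:R * N * phi ^+ 2 * rho ^+ 6 - 3%:R * N * phi ^+ 2 * rho ^+ 8 + 10%:R * N * phi ^+ 4 + 33%:R * N * phi ^+ 4 * rho ^+ 2 + 44%:R * N * phi ^+ 4 * rho ^+ 4 + 31%:R * N * phi ^+ 4 * rho ^+ 6 + 12%:R * N * phi ^+ 4 * rho ^+ 8 + 2%:R * N * phi ^+ 4 * rho ^+ 10 - 14%:R * N * phi ^+ 6 - 55%:R * N * phi ^+ 6 * rho ^+ 2 - 85%:R * N * phi ^+ 6 * rho ^+ 4 - 65%:R * N * phi ^+ 6 * rho ^+ 6 - 25%:R * N * phi ^+ 6 * rho ^+ 8 - 4%:R * N * phi ^+ 6 * rho ^+ 10 + 4%:R * N * phi ^+ 8 + 18%:R * N * phi ^+ 8 * rho ^+ 2 + 32%:R * N * phi ^+ 8 * rho ^+ 4 + 28%:R * N * phi ^+ 8 * rho ^+ 6 + 12%:R * N * phi ^+ 8 * rho ^+ 8 + 2%:R * N * phi ^+ 8 * rho ^+ 10 + N * rho ^+ 6 - 4%:R * N ^+ 2 * phi ^+ 2 * rho ^+ 2 - 5%:R * N ^+ 2 * phi ^+ 2 * rho ^+ 4 - 7%:R * N ^+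 2 * phi ^+ 2 * rho ^+ 6 - 6%:R * N ^+ 2 * phi ^+ 2 * rho ^+ 8 + 5%:R * N ^+ 2 * phi ^+ 4 + 24%:R * N ^+ 2 * phi ^+ 4 * rho ^+ 2 + 37%:R * N ^+ 2 * phi ^+ 4 * rho ^+ 4 + 26%:R * N ^+ 2 * phi ^+ 4 * rho ^+ 6 + 12%:R * N ^+ 2 * phi ^+ 4 * rho ^+ 8 + 4%:R * N ^+ 2 * phi ^+ 4 * rho ^+ 10 - 7%:R * N ^+ 2 * phi ^+ 6 - 33%:R * N ^+ 2 * phi ^+ 6 * rho ^+ 2 - 59%:R * N ^+ 2 * phi ^+ 6 * rho ^+ 4 - 49%:R * N ^+ 2 * phi ^+ 6 * rho ^+ 6 - 18%:R * N ^+ 2 * phi ^+ 6 * rho ^+ 8 - 2%:R * N ^+ 2 * phi ^+ 6 * rho ^+ 10 + 2%:R * N ^+ 2 * phi ^+ 8 + 10%:R * N ^+ 2 * phi ^+ 8 * rho ^+ 2 + 20%:R * N ^+ 2 * phi ^+ 8 * rho ^+ 4 + 20%:R * N ^+ 2 * phi ^+ 8 * rho ^+ 6 + 10%:R * N ^+ 2 * phi ^+ 8 * rho ^+ 8 + 2%:R * N ^+ 2 * phi ^+ 8 * rho ^+ 10 - N ^+ 2 * rho ^+ 4 + 2%:R * N ^+ 2 * rho ^+ 6 - 2%:R * N ^+ 3 * phi ^+ 2 * rho ^+ 2 + 4%:R * N ^+ 3 * phi ^+ 2 * rho ^+ 4 + 3%:R * N ^+ 3 * phi ^+ 2 * rho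 ^+ 6 - 3%:R * N ^+ 3 * phi ^+ 2 * rho ^+ 8 + 6%:R * N ^+ 3 * phi ^+ 4 * rho ^+ 2 + 6%:R * N ^+ 3 * phi ^+ 4 * rho ^+ 4 - 3%:R * N ^+ 3 * phi ^+ 4 * rho ^+ 6 + 3%:R * N ^+ 3 * phi ^+ 4 * rho ^+ 10 - 6%:R * N ^+ 3 * phi ^+ 6 * rho ^+ 2 - 16%:R * N ^+ 3 * phi ^+ 6 * rho ^+ 4 - 13%:R * N ^+ 3 * phi ^+ 6 * rho ^+ 6 - 3%:R * N ^+ 3 * phi ^+ 6 * rho ^+ 8 - N ^+ 3 * phi ^+ 6 * rho ^+ 10 - N ^+ 3 * phi ^+ 6 * rho ^+ 12 + 2%:R * N ^+ 3 * phi ^+ 8 * rho ^+ 2 + 8%:R * N ^+ 3 * phi ^+ 8 * rho ^+ 4 + 12%:R * N ^+ 3 * phi ^+ 8 * rho ^+ 6 + 8%:R * N ^+ 3 * phi ^+ 8 * rho ^+ 8 + 2%:R * N ^+ 3 * phi ^+ 8 * rho ^+ 10 - 2%:R * N ^+ 3 * rho ^+ 4 + N ^+ 3 * rho ^+ 6 + 4%:R * N ^+ 4 * phi ^+ 2 * rho ^+ 4 + 4%:R * N ^+ 4 * phi ^+ 2 * rho ^+ 6 - 6%:R * N ^+ 4 * phi ^+ 4 * rho ^+ 4 - 12%:R * N ^+ 4 * phi ^+ 4 * rho ^+ 6 - 6%:R * N ^+ 4 * phi ^+ 4 * rho ^+ 8 + 4%:R * N ^+ 4 * phi ^+ 6 *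 rho ^+ 4 + 12%:R * N ^+ 4 * phi ^+ 6 * rho ^+ 6 + 12%:R * N ^+ 4 * phi ^+ 6 * rho ^+ 8 + 4%:R * N ^+ 4 * phi ^+ 6 * rho ^+ 10 - N ^+ 4 * phi ^+ 8 * rho ^+ 4 - 4%:R * N ^+ 4 * phi ^+ 8 * rho ^+ 6 - 6%:R * N ^+ 4 * phi ^+ 8 * rho ^+ 8 - 4%:R * N ^+ 4 * phi ^+ 8 * rho ^+ 10 - N ^+ 4 * phi ^+ 8 * rho ^+ 12 - N ^+ 4 * rho ^+ 4 - phi ^+ 2 * rho ^+ 4 - phi ^+ 2 * rho ^+ 6 + 4%:R * phi ^+ 4 + 10%:R * phi ^+ 4 * rho ^+ 2 + 9%:R * phi ^+ 4 * rho ^+ 4 + 4%:R * phi ^+ 4 * rho ^+ 6 + phi ^+ 4 * rho ^+ 8 - 5%:R * phi ^+ 6 - 17%:R * phi ^+ 6 * rho ^+ 2 - 21%:R * phi ^+ 6 * rho ^+ 4 - 11%:R * phi ^+ 6 * rho ^+ 6 - 2%:R * phi ^+ 6 * rho ^+ 8 + phi ^+ 8 + 4%:R * phi ^+ 8 * rho ^+ 2 + 6%:R * phi ^+ 8 * rho ^+ 4 + 4%:R * phi ^+ 8 * rho ^+ 6 + phi ^+ 8 * rho ^+ 8)); ring.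
Qed.

Lemma cjlam : cj lam = lam.
Proof. by rewrite /lam cjD cj1 cjX hr. Qed.
Lemma cjEE : cj EE = EE.
Proof. by rewrite /EE cjB cjM cjlam cjX hp cj1. Qed.
Lemma cjRt : cj Rt = Rt.
Proof. by rewrite /Rt cjN cjB cjM cjlam cjX cjB hp cj1. Qed.
Lemma cjSt : cj St = St.
Proof. by rewrite /St cjN cjB cjM cjlam cjX cjD hp cj1. Qed.
Lemma cjTT : cj TT = TT.
Proof. by rewrite /TT !cjM !cjV cjRt cjSt cjEE hr. Qed.
Lemma cjDD : cj DD = - DD.
Proof.
rewrite /DD !(cjM, cjV, cjX, cjB, cjD, cjN, cj1, cjlam, hd, hp, cjEE, hr); ring.
Qed.

Lemma p3' : phi ^+ 3 - phi != 0.
Proof. by rewrite subr_eq0. Qed.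
Lemma omp2 : 1 - phi ^+ 2 != 0.
Proof.
have -> : 1 - phi ^+ 2 = (1 - phi) * (1 + phi) by ring.
rewrite mulf_neq0 //; first by rewrite subr_eq0 eq_sym p1.
by rewrite addrC addr_eq0 pm1.
Qed.

Lemma DD0 : DD != 0.
Proof.
by rewrite /DD !mulf_neq0 ?invr_neq0 ?expf_neq0 ?mulf_neq0 ?lam0 ?p0 ?omp2 ?EE0.
Qed.
Lemma TT0 : TT != 0.
Proof.
by rewrite /TT !mulf_neq0 ?invr_neq0 ?Rt0 ?St0 ?EE0.
Qed.

Lemma cjcc : cj cc = - (TT - DD).
Proof. by rewrite /cc cjN cjD cjTT cjDD. Qed.
Lemma ccS : cc + cj cc = TT.
Proof. by rewrite cjcc /cc; apply: (by3 h3 (- TT)); ring. Qed.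
Lemma ccD : cc - cj cc = DD.
Proof. by rewrite cjcc /cc; apply: (by3 h3 (- DD)); ring. Qed.
Lemma hcc : cj cc != cc.
Proof.
apply/negP => /eqP e; move: DD0; rewrite -ccD e subrr.
by rewrite eqxx.
Qed.

Lemma PPfact N :
  rho ^+ 2 * EE ^+ 5 * PP TT DD N = (N * EE - Rt) * (N * EE - St) * Gt N.
Proof.
rewrite -key_poly.
have eD2 : DD ^+ 2 = lam ^+ 5 * phi ^+ 2 * (1 - phi ^+ 2) ^+ 2 / (rho ^+ 2 * EE ^+ 4).
  have -> : DD ^+ 2 = delta ^+ 2 * (lam ^+ 2 * phi * (1 - phi ^+ 2) / (rho * EE ^+ 2)) ^+ 2.
    by rewrite /DD; field; rewrite r0 EE0.
  by rewrite -lamE; field; rewrite r0 EE0.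
rewrite /PP eD2 /TT.
by field; rewrite r0 EE0.
Qed.

Lemma PP_nz N : PP TT DD N = 0 -> N != 0 /\ N + 1 != 0.
Proof.
move=> hP; split; apply/negP => /eqP e; move: hP.
  rewrite /PP e.
  have -> : 0 ^+ 3 * (0 + 1) ^+ 2 - TT ^+ 2 * (0 + 1) ^+ 2 + DD ^+ 2 * 0 ^+ 2 = - TT ^+ 2 :> F by ring.
  by move/eqP; rewrite oppr_eq0 expf_eq0 (negbTE TT0).
have eN : N = -1 by apply/eqP; rewrite -addr_eq0 e.
rewrite /PP eN.
have -> : (-1) ^+ 3 * (-1 + 1) ^+ 2 - TT ^+ 2 * (-1 + 1) ^+ 2 + DD ^+ 2 * (-1) ^+ 2 = DD ^+ 2 :> F by ring.
by move/eqP; rewrite expf_eq0 (negbTE DD0).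
Qed.

Lemma rootsetE : rootset cc =
  [set N | (cj N == N) && [|| N == Rt / EE, N == St / EE | Gt N == 0]].
Proof.
apply/setP => N; rewrite !inE ccS ccD.
have fac : PP TT DD N = 0 <-> [\/ N = Rt / EE, N = St / EE | Gt N = 0].
  have nz : rho ^+ 2 * EE ^+ 5 != 0 by rewrite mulf_neq0 ?expf_neq0 ?EE0.
  split.
    move=> hP; move: (PPfact N); rewrite hP mulr0 => /esym/eqP.
    rewrite !mulf_eq0 => /orP [/orP [] |] /eqP e.
    - by apply: Or31; move/eqP: e; rewrite subr_eq0 => /eqP <-; rewrite mulfK ?EE0.
    - by apply: Or32; move/eqP: e; rewrite subr_eq0 => /eqP <-; rewrite mulfK ?EE0.
    - by apply: Or33.
  move=> hN; apply/eqP; rewrite -(mulIr_eq0 _ (mulIf nz)) mulrC PPfact.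
  case: hN => [->|->|->]; last by rewrite mulr0.
    by rewrite divfK ?EE0 // subrr mul0r mul0r.
  by rewrite divfK ?EE0 // subrr mulr0 mul0r.
apply/idP/idP.
  case/and4P => -> _ _ /eqP /fac [] -> ; by rewrite ?eqxx ?orbT.
case/andP => /eqP hN hor.
have hP : PP TT DD N = 0.
  by apply/fac; case/or3P: hor => /eqP e; [apply: Or31|apply: Or32|apply: Or33].
have [nz0 nz1] := PP_nz hP.
by rewrite hN eqxx nz0 nz1 hP eqxx.
Qed.

Lemma RtSt : Rt / EE != St / EE.
Proof.
apply/negP => /eqP e.
have : Rt - St = 0 by rewrite -(divfK EE0 Rt) e divfK ?EE0 // subrr.
have -> : Rt - St = lam * phi.
  by rewrite /Rt /St /lam; apply: (by3 h3 (phi + phi * rho ^+ 2)); ring.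
by move/eqP; rewrite mulf_eq0 (negbTE lam0) (negbTE p0).
Qed.

Lemma Gt_rr : Gt (Rt / EE) != 0.
Proof.
have -> : Gt (Rt / EE) = lam ^+ 3 * (phi - 1) ^+ 2 * phi * (phi + 1) * (1 - lam * (1 - phi) ^+ 2).
  rewrite /Gt divfK ?EE0 // /Rt /lam.
  by apply: (by3 h3 (phi * rho ^+ 2 + 3%:R * phi * rho ^+ 4 + 3%:R * phi * rho ^+ 6 + phi * rho ^+ 8 - phi ^+ 2 - 7%:R * phi ^+ 2 * rho ^+ 2 - 15%:R * phi ^+ 2 * rho ^+ 4 - 13%:R * phi ^+ 2 * rho ^+ 6 - 4%:R * phi ^+ 2 * rho ^+ 8 + phi ^+ 3 + 9%:R * phi ^+ 3 * rho ^+ 2 + 21%:R * phi ^+ 3 * rho ^+ 4 + 19%:R * phi ^+ 3 * rho ^+ 6 + 6%:R * phi ^+ 3 * rho ^+ 8 + phi ^+ 4 - phi ^+ 4 * rho ^+ 2 - 9%:R * phi ^+ 4 * rho ^+ 4 - 11%:R * phi ^+ 4 * rho ^+ 6 - 4%:R * phi ^+ 4 * rho ^+ 8 - phi ^+ 5 - 2%:R * phi ^+ 5 * rho ^+ 2 + 2%:R * phi ^+ 5 * rho ^+ 6 + phi ^+ 5 * rho ^+ 8)); ring.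
have f1 : phi - 1 != 0 by rewrite subr_eq0 p1.
have f2 : phi + 1 != 0 by rewrite addr_eq0 pm1.
have f3 : 1 - lam * (1 - phi) ^+ 2 != 0.
  rewrite subr_eq0 eq_sym sq1_imag //; first by rewrite cjB cj1 hp.
  by rewrite subr_eq0 eq_sym p1.
by rewrite !mulf_neq0 ?expf_neq0 ?lam0 ?p0 ?f1 ?f2 ?f3.
Qed.

Lemma Gt_ss : Gt (St / EE) != 0.
Proof.
have -> : Gt (St / EE) = lam ^+ 3 * (phi + 1) ^+ 2 * phi * (phi - 1) * (1 - lam * (1 + phi) ^+ 2).
  rewrite /Gt divfK ?EE0 // /St /lam.
  by apply: (by3 h3 (- phi * rho ^+ 2 - 3%:R * phi * rho ^+ 4 - 3%:R * phi * rho ^+ 6 - phi * rho ^+ 8 - phi ^+ 2 - 7%:R * phi ^+ 2 * rho ^+ 2 - 15%:R * phi ^+ 2 * rho ^+ 4 - 13%:R * phi ^+ 2 * rho ^+ 6 - 4%:R * phi ^+ 2 * rho ^+ 8 - phi ^+ 3 - 9%:R * phi ^+ 3 * rho ^+ 2 - 21%:R * phi ^+ 3 * rho ^+ 4 - 19%:R * phi ^+ 3 * rho ^+ 6 - 6%:R * phi ^+ 3 * rho ^+ 8 + phi ^+ 4 - phi ^+ 4 * rho ^+ 2 - 9%:R * phi ^+ 4 * rho ^+ 4 - 11%:R * phi ^+ 4 * rho ^+ 6 - 4%:R * phi ^+ 4 * rho ^+ 8 + phi ^+ 5 + 2%:R * phi ^+ 5 * rho ^+ 2 - 2%:R * phi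 ^+ 5 * rho ^+ 6 - phi ^+ 5 * rho ^+ 8)); ring.
have f1 : phi - 1 != 0 by rewrite subr_eq0 p1.
have f2 : phi + 1 != 0 by rewrite addr_eq0 pm1.
have f3 : 1 - lam * (1 + phi) ^+ 2 != 0.
  rewrite subr_eq0 eq_sym sq1_imag //; first by rewrite cjD cj1 hp.
  by rewrite addrC f2.
by rewrite !mulf_neq0 ?expf_neq0 ?lam0 ?p0 ?f1 ?f2 ?f3.
Qed.

Definition ca := - (phi ^+ 3 - phi) / rho.
Definition nZ (Z : F) := (1 - lam * (phi ^+ 3 - phi) / (rho * Z)) / EE.

Lemma ca0 : ca != 0.
Proof. by rewrite /ca mulf_neq0 ?oppr_eq0 ?p3' ?invr_neq0. Qed.

Lemma Gt_root N : cj N = N -> Gt N = 0 ->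
  exists Z, [/\ cj Z = Z, Z != 0, Z ^+ 3 - Z = ca & N = nZ Z].
Proof.
move=> hN hG.
have Y0 : N * EE - 1 != 0.
  apply/negP => /eqP y0; move: hG; rewrite /Gt y0.
  have -> : rho ^+ 2 * 0 ^+ 3 + rho ^+ 2 * lam * 0 ^+ 2 - lam ^+ 3 * (phi ^+ 3 - phi) ^+ 2
     = - (lam ^+ 3 * (phi ^+ 3 - phi) ^+ 2) :> F by ring.
  by move/eqP; rewrite oppr_eq0 mulf_eq0 !expf_eq0 /= (negbTE lam0) (negbTE p3').
set Y := N * EE - 1 in Y0 hG.
have cY : cj Y = Y by rewrite /Y cjB cjM hN cjEE cj1.
exists (- lam * (phi ^+ 3 - phi) / (rho * Y)); split.
- by rewrite !(cjM, cjV, cjN, cjB, cjX, cj1, cjlam, hp, hr, cY).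
- by rewrite !mulf_neq0 ?invr_neq0 ?mulf_neq0 ?oppr_eq0 ?lam0 ?p3' ?r0 ?Y0.
- apply/eqP; rewrite -subr_eq0; apply/eqP.
  have -> : (- lam * (phi ^+ 3 - phi) / (rho * Y)) ^+ 3 -
    (- lam * (phi ^+ 3 - phi) / (rho * Y)) - ca =
    (phi ^+ 3 - phi) / rho ^+ 3 * Gt N / Y ^+ 3.
    rewrite /Gt -/Y /ca; field.
    by rewrite r0 Y0.
  by rewrite hG mulr0 mul0r.
- have eN : N = (1 + Y) / EE by rewrite /Y; field; rewrite EE0.
  rewrite {1}eN /nZ; congr (_ / _).
  field; by rewrite ?mulf_neq0 ?oppr_eq0 ?lam0 ?p3' ?r0 ?Y0.
Qed.

Lemma Gt_back Z : Z != 0 -> Z ^+ 3 - Z = ca -> Gt (nZ Z) = 0.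
Proof.
move=> Z0 hZ.
have eY : nZ Z * EE - 1 = - lam * (phi ^+ 3 - phi) / (rho * Z).
  by rewrite /nZ; field; rewrite EE0 r0 Z0.
rewrite /Gt eY.
set W := - lam * (phi ^+ 3 - phi) / (rho * Z).
have -> : rho ^+ 2 * W ^+ 3 + rho ^+ 2 * lam * W ^+ 2 - lam ^+ 3 * (phi ^+ 3 - phi) ^+ 2 =
  rho ^+ 3 * W ^+ 3 / (phi ^+ 3 - phi) * (Z ^+ 3 - Z - ca).
  rewrite /W /ca; field; by rewrite p3' r0 Z0.
by rewrite hZ subrr mulr0.
Qed.

Lemma cjnZ Z : cj Z = Z -> cj (nZ Z) = nZ Z.
Proof.
by move=> hZ; rewrite /nZ !(cjM, cjV, cjN, cjB, cjX, cj1, cjlam, hp, hr, hZ, cjEE).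
Qed.

Lemma cjrr : cj (Rt / EE) = Rt / EE.
Proof. by rewrite cjM cjV cjRt cjEE. Qed.
Lemma cjss : cj (St / EE) = St / EE.
Proof. by rewrite cjM cjV cjSt cjEE. Qed.

Lemma count2 : (forall Z, cj Z = Z -> Z ^+ 3 - Z != ca) -> #|rootset cc| = 2.
Proof.
move=> hAS.
have -> : rootset cc = [set Rt / EE; St / EE].
  rewrite rootsetE; apply/setP => N; rewrite !inE.
  apply/idP/idP.
    case/andP => /eqP hN /or3P [/eqP -> | /eqP -> | /eqP hG]; rewrite ?eqxx ?orbT //.
    have [Z [hZ _ e _]] := Gt_root hN hG.
    by move: (hAS Z hZ); rewrite e eqxx.
  by case/orP => /eqP ->; rewrite ?cjrr ?cjss !eqxx ?orbT.
by rewrite cards2 RtSt.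
Qed.

Lemma cube_roots (V Z : F) : Z ^+ 3 - Z = V ^+ 3 - V -> [\/ Z = V, Z = V + 1 | Z = V - 1].
Proof.
move=> e.
have : (Z - V) * (Z - V - 1) * (Z - V + 1) = 0.
  have -> : (Z - V) * (Z - V - 1) * (Z - V + 1) = (Z ^+ 3 - Z) - (V ^+ 3 - V).
    by apply: (by3 h3 (- Z ^+ 2 * V + Z * V ^+ 2)); ring.
  by rewrite e subrr.
move/eqP; rewrite !mulf_eq0 => /orP [/orP [] |] /eqP h.
- by apply: Or31; apply/eqP; rewrite -subr_eq0 h.
- by apply: Or32; apply/eqP; rewrite -subr_eq0 -h; apply/eqP; ring.
- by apply: Or33; apply/eqP; rewrite -subr_eq0 -h; apply/eqP; ring.
Qed.

Lemma count5 V : cj V = V -> V ^+ 3 - V = ca -> #|rootset cc| = 5.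
Proof.
move=> hV hVc.
have e1 : (V + 1) ^+ 3 - (V + 1) = ca by rewrite -hVc; apply: (by3 h3 (V ^+ 2 + V)); ring.
have e2 : (V - 1) ^+ 3 - (V - 1) = ca by rewrite -hVc; apply: (by3 h3 (- V ^+ 2 + V)); ring.
have nz W : W ^+ 3 - W = ca -> W != 0.
  by move=> hW; apply/negP => /eqP W0; move: ca0; rewrite -hW W0 expr0n subrr eqxx.
have cjV1 : cj (V + 1) = V + 1 by rewrite cjD hV cj1.
have cjV2 : cj (V - 1) = V - 1 by rewrite cjB hV cj1.
have -> : rootset cc = [set x in [:: Rt / EE; St / EE; nZ V; nZ (V + 1); nZ (V - 1)]].
  rewrite rootsetE; apply/setP => N; rewrite !inE.
  apply/idP/idP.
    case/andP => /eqP hN /or3P [/eqP -> | /eqP -> | /eqP hG]; rewrite ?eqxx ?orbT //.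
    have [Z [hZ _ e ->]] := Gt_root hN hG.
    by rewrite -hVc in e; case: (cube_roots e) => ->; rewrite !eqxx ?orbT.
  move=> /orP [/eqP -> | /orP [/eqP -> | /orP [/eqP -> | /orP [/eqP -> | /eqP ->]]]];
   rewrite ?cjrr ?cjss ?cjnZ // !eqxx ?orbT //=.
  - by rewrite Gt_back ?eqxx ?orbT // nz.
  - by rewrite Gt_back ?eqxx ?orbT // nz.
  - by rewrite Gt_back ?eqxx ?orbT // nz.
have ninj W1 W2 : W1 != 0 -> W2 != 0 -> W1 != W2 -> nZ W1 != nZ W2.
  move=> h1 h2 h12; apply/negP => /eqP e; move: h12; apply/negP; rewrite negbK.
  have : (1 - lam * (phi ^+ 3 - phi) / (rho * W1)) = (1 - lam * (phi ^+ 3 - phi) / (rho * W2)).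
    by move: e; rewrite /nZ => /(mulIf (invr_neq0 EE0)).
  move/addrI/oppr_inj/(mulfI (mulf_neq0 lam0 p3')); rewrite !invfM => /(mulfI (invr_neq0 r0)).
  by move/invr_inj => ->.
have nr W : W ^+ 3 - W = ca -> (Rt / EE != nZ W) && (St / EE != nZ W).
  move=> hW; have W0 := nz _ hW; have G0 := Gt_back W0 hW.
  apply/andP; split; apply/negP => /eqP e.
    by move: Gt_rr; rewrite e G0 eqxx.
  by move: Gt_ss; rewrite e G0 eqxx.
have d01 : V != V + 1 by rewrite -subr_eq0 opprD addrA subrr add0r oppr_eq0 oner_eq0.
have d02 : V != V - 1 by rewrite -subr_eq0 opprB addrC subrK oner_eq0.
have d12 : V + 1 != V - 1.
  rewrite -subr_eq0; have -> : V + 1 - (V - 1) = - 1 by apply: (by3 h3 1); ring.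
  by rewrite oppr_eq0 oner_eq0.
rewrite cardsE; apply/eqP; rewrite -[5%N]/(size [:: Rt / EE; St / EE; nZ V; nZ (V + 1); nZ (V - 1)]).
apply/eqP/card_uniqP; rewrite /= !inE !negb_or.
move: (nr _ hVc) (nr _ e1) (nr _ e2) => /andP [-> ->] /andP [-> ->] /andP [-> ->].
rewrite RtSt !ninj ?nz ?hVc ?e1 ?e2 //.
Qed.

End Family.

Lemma roots_le (p : {poly F}) (d : nat) : p != 0 -> (size p <= d.+1)%N ->
  (#|[set x | p.[x] == 0%R]| <= d)%N.
Proof.
move=> p0 hs; have := card_roots p0.
have -> : [set x | root p x] = [set x | p.[x] == 0] by apply/setP => x; rewrite !inE.
by move=> h; rewrite -ltnS; apply: leq_trans h hs.
Qed.

Lemma Xn_roots (n : nat) (c : F) : (0 < n)%N -> (#|[set x : F | x ^+ n == c]| <= n)%N.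
Proof.
move=> n0.
have -> : [set x : F | x ^+ n == c] = [set x | ('X^n - c%:P).[x] == 0].
  by apply/setP => x; rewrite !inE !hornerE subr_eq0.
apply: roots_le; last by rewrite size_XnsubC.
by rewrite -size_poly_eq0 size_XnsubC.
Qed.

Definition Kset := [set x : F | cj x == x].

Lemma q_ge3 : (3 <= q)%N.
Proof. by rewrite /q; case: m m1 => // k _; rewrite expnS leq_pmulr ?expn_gt0. Qed.

Lemma card_K : (q <= #|Kset|)%N.
Proof.
set B := [set y : F | y ^+ q == - y].
have hB : (#|B| <= q)%N.
  have -> : B = [set x | ('X^q + 'X).[x] == 0].
    by apply/setP => x; rewrite !inE !hornerE addr_eq0.
  have hs : size ('X^q + 'X : {poly F}) = q.+1.
    by rewrite size_polyDl ?size_polyXn // size_polyX ltnS; apply: leq_trans q_ge3.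
  by apply: roots_le; rewrite ?hs // -size_poly_eq0 hs.
have := @fiber_bound F F (fun x => cj x - x) setT B #|Kset|.
rewrite cardsT hF -/q.
have H1 : {in [set: F], forall x, cj x - x \in B}.
  by move=> x _; rewrite inE -/(cj _) cjB cjK opprB.
have H2 : forall y, y \in B -> (#|[set x in [set: F] | (cj x - x == y)%R]| <= #|Kset|)%N.
  move=> y _.
  case: (set_0Vmem [set x in [set: F] | cj x - x == y]) => [->|[x0 hx0]].
    by rewrite cards0.
  rewrite -(card_imset _ (subIr x0)).
  apply: subset_leq_card; apply/subsetP => z /imsetP [x hx ->].
  move: hx hx0; rewrite !inE => /eqP hx /eqP hx0.
  rewrite cjB; apply/eqP.
  have -> : cj x = y + x by rewrite -hx subrK.
  have -> : cj x0 = y + x0 by rewrite -hx0 subrK.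
  by rewrite opprD addrACA subrr add0r.
move/(_ H1 H2) => h.
have h' : (q * q <= q * #|Kset|)%N.
  by apply: leq_trans h _; rewrite leq_mul2r hB orbT.
by rewrite leq_pmul2l ?q_gt0 in h'.
Qed.

Definition Tr (x : F) := \sum_(j < m) x ^+ (3 ^ j).

Lemma TrD x y : Tr (x + y) = Tr x + Tr y.
Proof. by rewrite /Tr -big_split; apply: eq_bigr => j _; exact: frobk. Qed.
Lemma Tr0 : Tr 0 = 0.
Proof. by rewrite /Tr big1 // => j _; rewrite expr0n expn_eq0. Qed.
Lemma TrN x : Tr (- x) = - Tr x.
Proof. by apply/eqP; rewrite -addr_eq0 -TrD addrC subrr Tr0. Qed.
Lemma Tr3 x : cj x = x -> Tr (x ^+ 3) = Tr x.
Proof.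
rewrite /cj /q /Tr; move: m1; case: m => [|k] // _ hx.
rewrite big_ord_recr big_ord_recl /= -exprM -expnS hx expn0 expr1.
by rewrite addrC; congr (_ + _); apply: eq_bigr => j _; rewrite -exprM -expnS.
Qed.
Lemma TrAS Z : cj Z = Z -> Tr (Z ^+ 3 - Z) = 0.
Proof. by move=> hZ; rewrite TrD TrN Tr3 // subrr. Qed.

Lemma Tr_nondeg e : e != 0 -> exists2 phi, phi \in Kset & Tr (phi * e) != 0.
Proof.
move=> e0; move: m1 card_K; rewrite /Tr /q; case: m => [|k] // _ hK.
set pe : {poly F} := \sum_(j < k.+1) (e ^+ (3 ^ j)) *: 'X^(3 ^ j).
have hpe x : pe.[x] = \sum_(j < k.+1) (x * e) ^+ (3 ^ j).
  rewrite /pe horner_sum; apply: eq_bigr => j _.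
  by rewrite hornerZ hornerXn exprMn mulrC.
have pe0 : pe != 0.
  apply/negP => /eqP h; move: (congr1 (fun p : {poly F} => p`_(3 ^ k)) h).
  rewrite coef0 /pe coef_sum (bigD1 ord_max) //= coefZ coefXn eqxx mulr1.
  rewrite big1 ?addr0 => [|j hj]; first by apply/eqP; rewrite expf_neq0.
  rewrite coefZ coefXn eqn_exp2l //.
  have -> : (k == j) = false.
    apply/negbTE; apply: contra hj => /eqP hk; apply/eqP; apply: val_inj.
    exact: (esym hk).
  by rewrite mulr0.
have spe : (size pe <= (3 ^ k).+1)%N.
  apply: leq_trans (size_sum _ _ _) _; apply/bigmax_leqP => j _.
  apply: leq_trans (size_scale_leq _ _) _; rewrite size_polyXn ltnS leq_exp2l //.
  by rewrite -ltnS.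
have hr := roots_le pe0 spe.
have : ~~ (Kset \subset [set x | pe.[x] == 0%R]).
  apply/negP => /subset_leq_card h.
  have : (3 ^ k.+1 <= 3 ^ k)%N by apply: leq_trans hK (leq_trans h hr).
  by rewrite leq_exp2l // ltnn.
case/subsetPn => phi hphi; rewrite inE hpe => hn.
by exists phi.
Qed.

Lemma nu2_params rho : cj rho = rho -> rho ^+ 3 != rho ->
  exists phi, [/\ cj phi = phi, phi ^+ 3 != phi &
    forall Z, cj Z = Z -> Z ^+ 3 - Z != - (phi ^+ 3 - phi) / rho].
Proof.
move=> hr r3.
have r0 : rho != 0 by apply: contraNneq r3 => ->; rewrite expr0n.
set sg := rho ^+ (3 ^ m.-1).
have hsg : sg ^+ 3 = rho.
  rewrite /sg -exprM mulnC -expnS prednK //.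
have csg : cj sg = sg by rewrite /sg cjX hr.
have sg0 : sg != 0 by rewrite /sg expf_neq0.
set e := sg^-1 - rho^-1.
have ce : cj e = e by rewrite /e cjB !cjV csg hr.
have e0 : e != 0.
  rewrite /e subr_eq0; apply/negP => /eqP h.
  have : sg = rho by rewrite -[sg]invrK h invrK.
  by move=> ee; move: r3; rewrite -{1}ee hsg eqxx.
have [phi hphi hT] := Tr_nondeg e0.
move: hphi; rewrite inE => /eqP hp.
have hAS : forall Z, cj Z = Z -> Z ^+ 3 - Z != - (phi ^+ 3 - phi) / rho.
  move=> Z hZ; apply/negP => /eqP h.
  have : Tr (- (phi ^+ 3 - phi) / rho) = - Tr (phi * e).
    have -> : - (phi ^+ 3 - phi) / rho = - ((phi / sg) ^+ 3 - phi / sg) + - (phi * e).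
      by rewrite /e -hsg; field; rewrite sg0.
    by rewrite TrD TrN TrAS ?oppr0 ?add0r ?TrN // cjM cjV hp csg.
  by rewrite -h TrAS // => /eqP; rewrite eq_sym oppr_eq0 (negbTE hT).
exists phi; split => //.
apply/negP => /eqP h3'; move: (hAS 0 cj0); rewrite h3' (subrr phi) oppr0 mul0r.
have -> : (0 : F) ^+ 3 + 0 = 0 by rewrite expr0n addr0.
by rewrite eqxx.
Qed.

Lemma S3_card : (#|[set x : F | x ^+ 3 == x]| <= 3)%N.
Proof.
have -> : [set x : F | x ^+ 3 == x] = [set x | ('X^3 - 'X).[x] == 0].
  by apply/setP => x; rewrite !inE !hornerE subr_eq0.
have hs : size ('X^3 - 'X : {poly F}) = 4%N.
  by rewrite size_polyDl ?size_polyXn // size_polyN size_polyX.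
by apply: roots_le; rewrite ?hs // -size_poly_eq0 hs.
Qed.

Lemma nu5_params rho : cj rho = rho -> rho != 0 -> (27 <= q)%N ->
  exists V phi, [/\ cj V = V, cj phi = phi, phi ^+ 3 != phi &
    V ^+ 3 - V = - (phi ^+ 3 - phi) / rho].
Proof.
move=> hr r0 hq.
case: (boolP [exists V, exists phi, [&& cj V == V, cj phi == phi, phi ^+ 3 != phi &
    rho * (V ^+ 3 - V) + (phi ^+ 3 - phi) == 0]]).
  case/existsP => V /existsP [phi] /and4P [/eqP hV /eqP hp p3 /eqP e].
  exists V, phi; split => //.
  move/eqP: e; rewrite addr_eq0 => /eqP e.
  by rewrite -e [RHS]mulrC mulKf.
rewrite negb_exists => /forallP H.
have H' : forall V phi, cj V = V -> cj phi = phi ->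
    rho * (V ^+ 3 - V) + (phi ^+ 3 - phi) = 0 -> phi ^+ 3 = phi /\ V ^+ 3 = V.
  move=> V phi hV hp e.
  move: (H V); rewrite negb_exists => /forallP /(_ phi).
  rewrite hV hp e !eqxx /= andbT negbK => /eqP p3.
  split => //; move: e; rewrite p3 subrr addr0 => /eqP; rewrite mulf_eq0 (negbTE r0) /=.
  by rewrite subr_eq0 => /eqP.
set f := fun x : F * F => rho * (x.1 ^+ 3 - x.1) + (x.2 ^+ 3 - x.2).
have hf : {in setX Kset Kset, forall x, f x \in Kset}.
  move=> [a b]; rewrite !inE /= => /andP [/eqP ha /eqP hb].
  by rewrite /f !(cjD, cjM, cjN, cjX, hr, ha, hb).
have hfib : forall y, y \in Kset -> (#|[set x in setX Kset Kset | (f x == y)%R]| <= 9)%N.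
  move=> y _.
  case: (set_0Vmem [set x in setX Kset Kset | f x == y]) => [->|[x0 hx0]].
    by rewrite cards0.
  set g := fun x : F * F => (x.1 - x0.1, x.2 - x0.2).
  have ginj : injective g.
    move=> [a b] [c d]; rewrite /g /= => [[]] /addIr -> /addIr -> //.
  rewrite -(card_imset _ ginj).
  apply: (@leq_trans #|setX [set x : F | x ^+ 3 == x] [set x : F | x ^+ 3 == x]|).
    apply: subset_leq_card; apply/subsetP => z /imsetP [x hx ->].
    move: hx hx0; rewrite !inE /= => /andP [/andP [/eqP ha /eqP hb] /eqP hx]
      /andP [/andP [/eqP ha0 /eqP hb0] /eqP hx0].
    have e : rho * ((x.1 - x0.1) ^+ 3 - (x.1 - x0.1)) +
      ((x.2 - x0.2) ^+ 3 - (x.2 - x0.2)) = 0.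
      have -> : rho * ((x.1 - x0.1) ^+ 3 - (x.1 - x0.1)) +
        ((x.2 - x0.2) ^+ 3 - (x.2 - x0.2)) = f x - f x0.
        rewrite /f frob3 (frob3 x.2) /=; ring.
      by rewrite hx hx0 subrr.
    have c1 : cj (x.1 - x0.1) = x.1 - x0.1 by rewrite cjB ha ha0.
    have c2 : cj (x.2 - x0.2) = x.2 - x0.2 by rewrite cjB hb hb0.
    have [e1 e2] := H' _ _ c1 c2 e.
    by rewrite e1 e2 !eqxx.
  by rewrite cardsX; apply: (leq_trans (leq_mul S3_card S3_card)).
have := fiber_bound hf hfib.
rewrite cardsX => h.
have hK := card_K.
have K0 : (0 < #|Kset|)%N by apply: leq_trans hK; apply: q_gt0.
rewrite leq_pmul2l // in h.
have : (27 <= 9)%N by apply: leq_trans hq (leq_trans hK h).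
by [].
Qed.

Lemma pow_nz (a : F) (k : nat) : #|F| = k.*2.+1 -> a != 0 -> a ^+ k.*2 = 1.
Proof.
move=> hn a0; have := expf_card a; rewrite hn exprS => e.
by apply: (mulfI a0); rewrite e mulr1.
Qed.

Lemma zeta_exists : (9 <= q)%N -> exists z : F, z ^+ q.+1 = -1 /\ z ^+ 8 != 1.
Proof.
move=> q9.
have qodd : odd q by rewrite /q oddX orbT.
set t := q./2.
have qt : q = t.*2.+1 by rewrite -[LHS]odd_double_half qodd.
set k := (t * q.+1)%N.
have [hn hqk] := nat_fact qt.
have hF' : #|F| = k.*2.+1 by rewrite hF -/q hn.
have t0 : (0 < t)%N by move: q9; rewrite qt; lia.
have k0 : (0 < k)%N by rewrite /k muln_gt0 t0.
set NZ := [set x : F | x != 0].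
have cNZ : #|NZ| = k.*2.
  have -> : NZ = [set~ 0] by apply/setP => x; rewrite !inE.
  by rewrite cardsC1 hF'.
have [g hg] : exists g : F, (g != 0) && (g ^+ k != 1).
  have : ~~ (NZ \subset [set x : F | x ^+ k == 1]).
    apply/negP => /subset_leq_card; rewrite cNZ => h.
    have := leq_trans h (Xn_roots 1 k0); rewrite -addnn; lia.
  case/subsetPn => g; rewrite !inE => g0 g1; exists g; exact/andP.
case/andP: hg => g0 g1.
have gk : g ^+ k = -1.
  have : (g ^+ k - 1) * (g ^+ k + 1) = 0.
    by rewrite -subr_sqr -exprM mulnC mul2n (pow_nz hF' g0) expr1n subrr.
  move/eqP; rewrite mulf_eq0 subr_eq0 (negbTE g1) /= addr_eq0 => /eqP //.
set g0' := g ^+ t.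
set Zs := [set z : F | z ^+ q.+1 == -1].
have hZs : (q.+1 <= #|Zs|)%N.
  have hmap : {in NZ, forall a, g0' * a ^+ q.-1 \in Zs}.
    move=> a; rewrite !inE => a0.
    rewrite exprMn /g0' -!exprM hqk (pow_nz hF' a0) mulr1.
    by rewrite gk.
  have hfib : forall y, y \in Zs -> (#|[set a in NZ | (g0' * a ^+ q.-1 == y)%R]| <= q.-1)%N.
    move=> y _.
    apply: leq_trans (Xn_roots (y / g0') _); last by move: q9; lia.
    apply: subset_leq_card; apply/subsetP => a; rewrite !inE => /andP [_ /eqP <-].
    by rewrite [X in _ == X]mulrC mulKf ?eqxx // /g0' expf_neq0.
  have := fiber_bound hmap hfib; rewrite cNZ -hqk mulnC leq_pmul2r //.
  by move: q9; lia.
have : ~~ (Zs \subset [set z : F | z ^+ 8 == 1]).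
  apply/negP => /subset_leq_card h.
  have := leq_trans hZs (leq_trans h (Xn_roots 1 (isT : (0 < 8)%N))).
  by move: q9; lia.
case/subsetPn => z; rewrite !inE => /eqP hz h8; exists z; split => //.
Qed.

Lemma params_from_zeta z : z ^+ q.+1 = -1 -> z ^+ 8 != 1 ->
  [/\ cj (z^-1 - z) = z^-1 - z, cj (- (z + z^-1)) = - - (z + z^-1),
      (- (z + z^-1)) ^+ 2 = 1 + (z^-1 - z) ^+ 2, - (z + z^-1) != 0 &
      (z^-1 - z) ^+ 3 != z^-1 - z].
Proof.
move=> hz h8.
have z0 : z != 0.
  apply/negP => /eqP z0; move: hz; rewrite z0 expr0n /= => /eqP.
  by rewrite eq_sym oppr_eq0 oner_eq0.
have cz : cj z = - z^-1.
  apply: (mulIf z0); rewrite mulNr mulVf // /cj -exprSr hz.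
  done.
have e8 : z ^+ 8 - 1 = z ^+ 4 * (- (z + z^-1)) * ((z^-1 - z) ^+ 3 - (z^-1 - z)).
  apply: (by3 h3 (z ^+ 6 - z ^+ 2)); field; exact: z0.
have e8' : z ^+ 8 - 1 != 0 by rewrite subr_eq0.
rewrite e8 !mulf_eq0 !negb_or in e8'.
case/andP: e8' => /andP [_ hd] hr.
have c1 : cj (z^-1 - z) = z^-1 - z by rewrite cjB cjV cz invrN invrK opprK addrC.
have c2 : cj (- (z + z^-1)) = - - (z + z^-1).
  by rewrite cjN cjD cjV cz invrN invrK; ring.
have c3 : (- (z + z^-1)) ^+ 2 = 1 + (z^-1 - z) ^+ 2 by apply: (by3 h3 1); field.
have c4 : (z^-1 - z) ^+ 3 != z^-1 - z by rewrite subr_eq0 in hr.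
by split.
Qed.

Lemma final : ((9 <= q)%N -> (0 < nu (@powf F q) 2)%N) /\
              ((27 <= q)%N -> (0 < nu (@powf F q) 5)%N).
Proof.
have gen : forall cc0 : F, cj cc0 != cc0 -> forall i, #|rootset cc0| = i ->
    (0 < nu (@powf F q) i)%N.
  move=> cc0 hc i hi; apply/card_gt0P; exists (- cc0); rewrite inE.
  have hb : cj (- cc0) != - cc0 by rewrite cjN; apply: contra hc => /eqP /oppr_inj ->.
  rewrite betaE // opprK fiberE // hi eqxx andbT.
  by apply: contra hb => /eqP ->; rewrite cj0.
split => hq.
  have [z [hz h8]] := zeta_exists hq.
  have [hr hd hdr d0 r3] := params_from_zeta hz h8.
  have r0 : z^-1 - z != 0 by apply: contraNneq r3 => ->; rewrite expr0n.
  have [phi [hp p3 hAS]] := nu2_params hr r3.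
  apply: (gen _ (hcc hr hd hdr r0 d0 hp p3)).
  exact: (count2 hr hd hdr r0 d0 hp p3 hAS).
have [z [hz h8]] := zeta_exists (leq_trans (isT : (9 <= 27)%N) hq).
have [hr hd hdr d0 r3] := params_from_zeta hz h8.
have r0 : z^-1 - z != 0 by apply: contraNneq r3 => ->; rewrite expr0n.
have [V [phi [hV hp p3 hVc]]] := nu5_params hr r0 hq.
apply: (gen _ (hcc hr hd hdr r0 d0 hp p3)).
exact: (count5 hr hd hdr r0 d0 hp p3 hV hVc).
Qed.

End Conj.

Local Close Scope ring_scope.

Theorem proposition9 (m : nat) (F : finFieldType) :
  (1 <= m)%N ->
  #|F| = (3 ^ m) ^ 2 ->
  ((9 <= 3 ^ m)%N -> (0 < nu (@powf F (3 ^ m)) 2)%N) /\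
  ((27 <= 3 ^ m)%N -> (0 < nu (@powf F (3 ^ m)) 5)%N).
Proof.
move=> m1 hF.
have hF' : #|F| = (3 ^ m * 3 ^ m)%N by rewrite hF mulnn.
have h3 : (3%:R = 0 :> F)%R.
  apply: (@pcharf0 _ 3).
  apply: (@card_finPcharP _ 3 (m * 2)) => //.
  by rewrite hF expnM.
exact: (final h3 hF' m1).
Qed.
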